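(* Let $\mathcal T$ be a triangulated category and $\mathcal T^{\le0}$, $\mathcal T^{\ge0}$ full subcategories such that, for every distinguished triangle $X'\to X\to X''\xrightarrow{+1}$, if $X'$ and $X''$ belong to $\mathcal T^{\le0}$ (resp. $\mathcal T^{\ge0}$) then so does $X$. Let $M_1\to M\to M_2\xrightarrow{+1}$ be a distinguished triangle, and suppose one of the following holds: (i) $M_1\in\mathcal T^{<0}$ and there is a distinguished triangle $M_2'\to M_2\to M_2''\xrightarrow{+1}$ with $M_2'\in\mathcal T^{<0}$, $M_2''\in\mathcal T^{\ge0}$; (ii) $M_2\in\mathcal T^{\ge0}$ and there is a distinguished triangle $M_1'\to M_1\to M_1''\xrightarrow{+1}$ with $M_1'\in\mathcal T^{<0}$, $M_1''\in\mathcal T^{\ge0}$. Then there exists a distinguished triangle $M'\to M\to M''\xrightarrow{+1}$ with $M'\in\mathcal T^{<0}$ and $M''\in\mathcal T^{\ge0}$.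
   Context: $\mathcal T^{<0}$ denotes the full subcategory $\mathcal T^{\le0}[1]=\{X[1]:X\in\mathcal T^{\le0}\}$ (closed under isomorphism). *)

(* Defs.v *)
From HB Require Import structures.
From mathcomp Require Import all_boot all_algebra.
Set Implicit Arguments. Unset Strict Implicit. Unset Printing Implicit Defensive.
Import GRing.Theory.
Local Open Scope ring_scope.

Record cat_ops := CatOps {
  Obj : Type;
  hom : Obj -> Obj -> zmodType;
  comp : forall X Y Z : Obj, hom Y Z -> hom X Y -> hom X Z;
  idm : forall X : Obj, hom X X
}.
Arguments comp {c X Y Z}.
Arguments idm {c}.

Section Cat.
Variable C : cat_ops.
Local Notation "g ⊚ f" := (comp g f) (at level 40, left associativity).

Definition is_iso (X Y : Obj C) (f : hom X Y) : Prop :=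
  exists g : hom Y X, g ⊚ f = idm X /\ f ⊚ g = idm Y.

Definition isomorphic (X Y : Obj C) : Prop := exists f : hom X Y, is_iso f.

Definition is_zero_obj (O : Obj C) : Prop :=
  forall X : Obj C, (forall f g : hom O X, f = g) /\ (forall f g : hom X O, f = g).

Definition is_additive : Prop :=
  [/\ (forall (X Y Z W : Obj C) (h : hom Z W) (g : hom Y Z) (f : hom X Y),
         h ⊚ (g ⊚ f) = (h ⊚ g) ⊚ f),
      (forall (X Y : Obj C) (f : hom X Y), idm Y ⊚ f = f /\ f ⊚ idm X = f),
      (forall (X Y Z : Obj C) (g1 g2 : hom Y Z) (f : hom X Y),
         (g1 + g2) ⊚ f = g1 ⊚ f + g2 ⊚ f),
      (forall (X Y Z : Obj C) (g : hom Y Z) (f1 f2 : hom X Y),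
         g ⊚ (f1 + f2) = g ⊚ f1 + g ⊚ f2) &
      (exists O : Obj C, is_zero_obj O) /\
      (forall X Y : Obj C, exists (S : Obj C) (i1 : hom X S) (i2 : hom Y S)
           (p1 : hom S X) (p2 : hom S Y),
         [/\ p1 ⊚ i1 = idm X, p2 ⊚ i2 = idm Y, p1 ⊚ i2 = 0, p2 ⊚ i1 = 0 &
             i1 ⊚ p1 + i2 ⊚ p2 = idm S])].
End Cat.

Record tri_ops (C : cat_ops) := TriOps {
  shO : Obj C -> Obj C;
  shM : forall X Y : Obj C, hom X Y -> hom (shO X) (shO Y);
  dist : forall X Y Z : Obj C, hom X Y -> hom Y Z -> hom Z (shO X) -> Prop
}.
Arguments shO {C t}.
Arguments shM {C t X Y}.
Arguments dist {C t X Y Z}.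

Section Tri.
Variables (C : cat_ops) (T : tri_ops C).
Local Notation "g ⊚ f" := (comp g f) (at level 40, left associativity).
Local Notation "X [1]" := (@shO C T X) (at level 2, format "X [1]").
Local Notation sh := (@shM C T _ _).
Local Notation dist := (@dist C T _ _ _).

Definition shift_ok : Prop :=
  [/\ (forall X : Obj C, sh (idm X) = idm (X[1])),
      (forall (X Y Z : Obj C) (g : hom Y Z) (f : hom X Y), sh (g ⊚ f) = sh g ⊚ sh f),
      (forall (X Y : Obj C) (f g : hom X Y), sh (f + g) = sh f + sh g),
      (forall (X Y : Obj C), bijective (@shM C T X Y)) &
      (forall Y : Obj C, exists X : Obj C, isomorphic (X[1]) Y)].

Definition TR1 : Prop :=
  [/\ (forall (X Y Z X' Y' Z' : Obj C) (f : hom X Y) (g : hom Y Z) (h : hom Z (X[1]))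
         (f' : hom X' Y') (g' : hom Y' Z') (h' : hom Z' (X'[1]))
         (a : hom X X') (b : hom Y Y') (c : hom Z Z'),
         dist f g h -> is_iso a -> is_iso b -> is_iso c ->
         f' ⊚ a = b ⊚ f -> g' ⊚ b = c ⊚ g -> h' ⊚ c = sh a ⊚ h ->
         dist f' g' h'),
      (forall (X O : Obj C), is_zero_obj O ->
         dist (idm X) (0 : hom X O) (0 : hom O (X[1]))) &
      (forall (X Y : Obj C) (f : hom X Y),
         exists (Z : Obj C) (g : hom Y Z) (h : hom Z (X[1])), dist f g h)].

Definition TR2 : Prop :=
  forall (X Y Z : Obj C) (f : hom X Y) (g : hom Y Z) (h : hom Z (X[1])),
    dist f g h <-> dist g h (- sh f).

Definition TR3 : Prop :=
  forall (X Y Z X' Y' Z' : Obj C) (f : hom X Y) (g : hom Y Z) (h : hom Z (X[1]))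
         (f' : hom X' Y') (g' : hom Y' Z') (h' : hom Z' (X'[1]))
         (a : hom X X') (b : hom Y Y'),
    dist f g h -> dist f' g' h' -> f' ⊚ a = b ⊚ f ->
    exists c : hom Z Z', g' ⊚ b = c ⊚ g /\ h' ⊚ c = sh a ⊚ h.

(** TR4 (octahedral axiom, as in the Stacks project, Tag 05QK) *)
Definition TR4 : Prop :=
  forall (X Y Z Q1 Q2 Q3 : Obj C) (f : hom X Y) (g : hom Y Z)
         (p1 : hom Y Q1) (d1 : hom Q1 (X[1]))
         (p2 : hom Z Q2) (d2 : hom Q2 (X[1]))
         (p3 : hom Z Q3) (d3 : hom Q3 (Y[1])),
    dist f p1 d1 -> dist (g ⊚ f) p2 d2 -> dist g p3 d3 ->
    exists (a : hom Q1 Q2) (b : hom Q2 Q3),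
      [/\ dist a b (sh p1 ⊚ d3), a ⊚ p1 = p2 ⊚ g, d2 ⊚ a = d1,
          b ⊚ p2 = p3 & d3 ⊚ b = sh f ⊚ d2].

Definition is_triangulated : Prop :=
  [/\ is_additive C, shift_ok, TR1, TR2 & TR3 /\ TR4].

Definition ext_closed (P : Obj C -> Prop) : Prop :=
  forall (X' X X'' : Obj C) (u : hom X' X) (v : hom X X'') (w : hom X'' (X'[1])),
    dist u v w -> P X' -> P X'' -> P X.

(** T^{<0} := T^{<=0}[1], closed under isomorphism. *)
Definition shifted_lt0 (Le : Obj C -> Prop) (X : Obj C) : Prop :=
  exists Y : Obj C, Le Y /\ isomorphic X (Y[1]).
End Tri.

(* Main.v *)
Require Import Defs.
From mathcomp Require Import ssreflect ssrfun ssrbool eqtype ssralg.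
Import GRing.Theory.
Local Open Scope ring_scope.
Set Implicit Arguments. Unset Strict Implicit.

Section Aux.
Variables (C : cat_ops) (T : tri_ops C).
Hypothesis HT : is_triangulated T.

Lemma compA' (X Y Z W : Obj C) (h : hom Z W) (g : hom Y Z) (f : hom X Y) :
  Defs.comp h (Defs.comp g f) = Defs.comp (Defs.comp h g) f.
Proof. by case: HT => [[]]. Qed.

Lemma comp1l (X Y : Obj C) (f : hom X Y) : Defs.comp (idm Y) f = f.
Proof. by case: HT => [[_ H]] _ _ _ _; case: (H _ _ f). Qed.

Lemma comp1r (X Y : Obj C) (f : hom X Y) : Defs.comp f (idm X) = f.
Proof. by case: HT => [[_ H]] _ _ _ _; case: (H _ _ f). Qed.

Lemma compDl (X Y Z : Obj C) (g1 g2 : hom Y Z) (f : hom X Y) :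
  Defs.comp (g1 + g2) f = Defs.comp g1 f + Defs.comp g2 f.
Proof. by case: HT => [[_ _ H]]. Qed.

Lemma compDr (X Y Z : Obj C) (g : hom Y Z) (f1 f2 : hom X Y) :
  Defs.comp g (f1 + f2) = Defs.comp g f1 + Defs.comp g f2.
Proof. by case: HT => [[_ _ _ H]]. Qed.

Lemma comp0l (X Y Z : Obj C) (f : hom X Y) : Defs.comp (0 : hom Y Z) f = 0.
Proof. by apply: (addrI (Defs.comp (0 : hom Y Z) f)); rewrite -compDl !addr0. Qed.

Lemma comp0r (X Y Z : Obj C) (g : hom Y Z) : Defs.comp g (0 : hom X Y) = 0.
Proof. by apply: (addrI (Defs.comp g (0 : hom X Y))); rewrite -compDr !addr0. Qed.

Lemma compNl (X Y Z : Obj C) (g : hom Y Z) (f : hom X Y) :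
  Defs.comp (- g) f = - Defs.comp g f.
Proof. by apply: (addrI (Defs.comp g f)); rewrite -compDl !subrr comp0l. Qed.

Lemma compNr (X Y Z : Obj C) (g : hom Y Z) (f : hom X Y) :
  Defs.comp g (- f) = - Defs.comp g f.
Proof. by apply: (addrI (Defs.comp g f)); rewrite -compDr !subrr comp0r. Qed.

Lemma sh1 (X : Obj C) : shM (t := T) (idm X) = idm _.
Proof. by case: HT => _ [H]. Qed.

Lemma shD (X Y : Obj C) (f g : hom X Y) : shM (t := T) (f + g) = shM f + shM g.
Proof. by case: HT => _ [_ _ H]. Qed.

Lemma sh0 (X Y : Obj C) : shM (t := T) (0 : hom X Y) = 0.
Proof. by apply: (addrI (shM (t := T) (0 : hom X Y))); rewrite -shD !addr0. Qed.

Lemma shN (X Y : Obj C) (f : hom X Y) : shM (t := T) (- f) = - shM f.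
Proof. by apply: (addrI (shM (t := T) f)); rewrite -shD !subrr sh0. Qed.

Lemma sh_surj (X Y : Obj C) (k : hom (shO (t := T) X) (shO (t := T) Y)) :
  exists f : hom X Y, shM (t := T) f = k.
Proof.
case: HT => _ [_ _ _ H _] _ _ _.
case: (H X Y) => g _ gK; by exists (g k); rewrite gK.
Qed.

Lemma TR2' : TR2 T. Proof. by case: HT. Qed.

Lemma transport (X Y Z X' Y' Z' : Obj C) (f : hom X Y) (g : hom Y Z)
  (h : hom Z (shO (t := T) X))
  (a : hom X X') (a' : hom X' X) (b : hom Y Y') (b' : hom Y' Y)
  (c : hom Z Z') (c' : hom Z' Z) :
  dist (t := T) f g h ->
  Defs.comp a' a = idm X -> Defs.comp a a' = idm X' ->
  Defs.comp b' b = idm Y -> Defs.comp b b' = idm Y' ->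
  Defs.comp c' c = idm Z -> Defs.comp c c' = idm Z' ->
  dist (t := T) (Defs.comp b (Defs.comp f a')) (Defs.comp c (Defs.comp g b')) (Defs.comp (shM a) (Defs.comp h c')).
Proof.
move=> Hd Ha1 Ha2 Hb1 Hb2 Hc1 Hc2.
case: HT => _ _ [H _ _] _ _.
apply: (H _ _ _ _ _ _ f g h _ _ _ a b c Hd).
- by exists a'.
- by exists b'.
- by exists c'.
- by rewrite -!compA' Ha1 comp1r.
- by rewrite -!compA' Hb1 comp1r.
- by rewrite -!compA' Hc1 comp1r.
Qed.

Lemma flip (X Y Z : Obj C) (f : hom X Y) (g : hom Y Z) (h : hom Z (shO (t := T) X)) :
  dist (t := T) f g h -> dist (t := T) (- f) (- g) h.
Proof.
move=> Hd.
have HN : Defs.comp (- idm Y) (- idm Y) = idm Y by rewrite compNl compNr opprK comp1l.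
have := transport Hd (comp1l (idm X)) (comp1l (idm X)) HN HN
  (comp1l (idm Z)) (comp1l (idm Z)).
  by rewrite !comp1r compNl compNr comp1l sh1 !comp1l comp1r.
Qed.

Lemma deshift (X Y Z : Obj C) (u : hom (shO (t := T) X) (shO (t := T) Y))
  (v : hom (shO (t := T) Y) (shO (t := T) Z))
  (w : hom (shO (t := T) Z) (shO (t := T) (shO (t := T) X))) :
  dist (t := T) u v w ->
  exists (u0 : hom X Y) (v0 : hom Y Z) (w0 : hom Z (shO (t := T) X)),
    dist (t := T) u0 v0 w0.
Proof.
move=> Hd.
case: (sh_surj u) => u0 Hu; case: (sh_surj v) => v0 Hv; case: (sh_surj w) => w0 Hw.
exists u0, v0, (- w0).
apply/TR2'; apply/TR2'; apply/TR2'.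
rewrite shN opprK Hu Hv Hw; exact: flip.
Qed.

Lemma unrot (X Y Z : Obj C) (g : hom Y Z) (h : hom Z (shO (t := T) X))
  (k : hom (shO (t := T) X) (shO (t := T) Y)) :
  dist (t := T) g h k -> exists f : hom X Y, dist (t := T) f g h.
Proof.
move=> Hd; case: (sh_surj (- k)) => f Hf; exists f.
by apply/TR2'; rewrite Hf opprK.
Qed.

Lemma ext_lt0 (Le : Obj C -> Prop) (HLe : ext_closed T Le) :
  ext_closed T (shifted_lt0 T Le).
Proof.
move=> X' X X'' u v w Hd [A [HA [a [a' [Ha1 Ha2]]]]] [B [HB [c [c' [Hc1 Hc2]]]]].
case: HT => _ [_ _ _ _ Hs] _ _ _.
case: (Hs X) => E [e [e' [He1 He2]]].
have := transport Hd Ha1 Ha2 He2 He1 Hc1 Hc2.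
move=> /deshift [u0 [v0 [w0 Hd0]]].
exists E; split; first exact: (HLe _ _ _ _ _ _ Hd0).
by exists e', e.
Qed.

End Aux.

Theorem lemma2p1 (C : cat_ops) (T : tri_ops C) (HT : is_triangulated T)
  (Le Ge : Obj C -> Prop) (HLe : ext_closed T Le) (HGe : ext_closed T Ge)
  (M1 M M2 : Obj C) (f : hom M1 M) (g : hom M M2) (h : hom M2 (shO M1))
  (Hdist : dist (t := T) f g h) :
  ( (shifted_lt0 T Le M1 /\
      exists (M2' M2'' : Obj C) (a : hom M2' M2) (b : hom M2 M2'')
             (c : hom M2'' (shO M2')),
        dist (t := T) a b c /\ shifted_lt0 T Le M2' /\ Ge M2'')
    \/
    (Ge M2 /\
      exists (M1' M1'' : Obj C) (a : hom M1' M1) (b : hom M1 M1'')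
             (c : hom M1'' (shO M1')),
        dist (t := T) a b c /\ shifted_lt0 T Le M1' /\ Ge M1'') ) ->
  exists (M' M'' : Obj C) (a : hom M' M) (b : hom M M'') (c : hom M'' (shO M')),
    dist (t := T) a b c /\ shifted_lt0 T Le M' /\ Ge M''.
Proof.
have HT' := HT.
case: HT' => _ [_ _ _ _ Hs] [_ _ Hex] HTR2 [_ HTR4].
case.
- move=> [HP1 [M2' [M2'' [a [b [c [Hd2 [HP2 HG2]]]]]]]].
  have R1 := proj1 (HTR2 _ _ _ _ _ _) Hdist.
  have R2 := proj1 (HTR2 _ _ _ _ _ _) Hd2.
  case: (Hex _ _ (Defs.comp b g)) => Q2 [p2 [d2 Hq]].
  case: (HTR4 _ _ _ _ _ _ _ _ _ _ _ _ _ _ R1 Hq R2) => al [be [Hoct _ _ _ _]].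
  case: (Hs Q2) => M' [e [e' [He1 He2]]].
  have := transport HT Hoct (comp1l HT _) (comp1l HT _) He2 He1
    (comp1l HT _) (comp1l HT _).
  move=> /(deshift HT) [u0 [v0 [w0 Hd0]]].
  have HPM' := ext_lt0 HT HLe Hd0 HP1 HP2.
  have := transport HT Hq (comp1l HT _) (comp1l HT _) (comp1l HT _) (comp1l HT _)
    He2 He1.
  move=> /(unrot HT) [f0 Hf0].
  by exists M', M2'', f0, (Defs.comp (idm M2'') (Defs.comp (Defs.comp b g) (idm M))), (Defs.comp e' (Defs.comp p2 (idm M2''))).
- move=> [HG2 [M1' [M1'' [a [b [c [Hd1 [HP1 HG1]]]]]]]].
  case: (Hex _ _ (Defs.comp f a)) => Q [p2 [d2 Hq]].
  case: (HTR4 _ _ _ _ _ _ _ _ _ _ _ _ _ _ Hd1 Hq Hdist) => al [be [Hoct _ _ _ _]].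
  have HGQ := HGe _ _ _ _ _ _ Hoct HG1 HG2.
  by exists M1', Q, (Defs.comp f a), p2, d2.
Qed.
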